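(* Let $Q=[u_1,\dots,u_n]\subset\mathbb{S}^2$ with $n\ge 6$ be a spherical polygon not contained in any closed hemisphere, without self-intersections and antipodal intersections, with exactly three essential vertices. Then no two of the three essential vertices are consecutive in $Q$.
   Context: A spherical polygon has edges the minimal great-circle arcs between consecutive vertices (indices mod $n$); no three vertices lie on a common great circle. A set is balanced if not contained in any closed hemisphere; for balanced $Q$, $u_m$ is essential if the vertex set minus $u_m$ is not balanced. Self-intersection: two non-adjacent edges intersect; antipodal intersection: non-adjacent edges $e,f$ with $e\cap(-f)\neq\emptyset$. *)

(* Defs.v *)
(* points of S^2 are unit row vectors in 'rV[R]_3, R : realType. *)
From HB Require Import structures.
From mathcomp Require Import all_boot all_order all_algebra.
From mathcomp Require Import reals.
Set Implicit Arguments. Unset Strict Implicit. Unset Printing Implicit Defensive.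
Import Order.TTheory GRing.Theory Num.Theory.
Local Open Scope ring_scope.

Section Spherical.
Variable R : realType.

Definition dot (a b : 'rV[R]_3) : R := \sum_(i < 3) a 0 i * b 0 i.

Definition on_sphere (x : 'rV[R]_3) : Prop := dot x x = 1.

Definition det3 (a b c : 'rV[R]_3) : R :=
  \det (\matrix_(i < 3, j < 3) (if i == 0 :> nat then a 0 j
                                else if i == 1 :> nat then b 0 j else c 0 j)).

(* the (minimal) great-circle arc between a and b (with a <> +-b):
   unit vectors in the closed cone spanned by a and b *)
Definition on_arc (a b x : 'rV[R]_3) : Prop :=
  on_sphere x /\ exists s t : R, 0 <= s /\ 0 <= t /\ x = s *: a + t *: b.

(* closed hemisphere with pole v : {x | dot v x >= 0}; a family of points
   is balanced if it lies in no closed hemisphere *)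
Definition balanced (I : Type) (P : I -> Prop) (w : I -> 'rV[R]_3) : Prop :=
  forall v : 'rV[R]_3, v != 0 -> exists k, P k /\ dot v (w k) < 0.
End Spherical.

Definition nxt (n : nat) (i : 'I_n) : 'I_n :=
  Ordinal (ltn_pmod i.+1 (leq_ltn_trans (leq0n i) (ltn_ord i))).

Section Polygon.
Variables (R : realType) (n : nat) (u : 'I_n -> 'rV[R]_3).

(* no three vertices on a common great circle *)
Definition general_position : Prop :=
  forall i j k : 'I_n, i != j -> j != k -> i != k -> det3 (u i) (u j) (u k) != 0.

Definition on_edge (i : 'I_n) (x : 'rV[R]_3) : Prop := on_arc (u i) (u (nxt i)) x.

Definition nonadjacent (i j : 'I_n) : Prop := i != j /\ j != nxt i /\ i != nxt j.

Definition no_self_intersection : Prop :=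
  forall i j, nonadjacent i j -> ~ exists x, on_edge i x /\ on_edge j x.

Definition no_antipodal_intersection : Prop :=
  forall i j, nonadjacent i j -> ~ exists x, on_edge i x /\ on_edge j (- x).

Definition polygon_balanced : Prop := balanced (fun _ : 'I_n => True) u.

Definition essential (m : 'I_n) : Prop := ~ balanced (fun k : 'I_n => k != m) u.
End Polygon.

(* Main.v *)
Require Import Defs.
From HB Require Import structures.
From mathcomp Require Import all_boot all_order all_algebra.
From mathcomp Require Import reals.
From mathcomp Require Import ring lra zify.
From Stdlib Require Import Classical.
Import Order.TTheory GRing.Theory Num.Theory.
Set Implicit Arguments. Unset Strict Implicit. Unset Printing Implicit Defensive.
Local Open Scope ring_scope.



Lemma det33 (R : realType) (M : 'M[R]_3) : let f i j := M (inord i) (inord j) in \det M =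
  f 0 0 * (f 1 1 * f 2 2 - f 1 2 * f 2 1)
  - f 0 1 * (f 1 0 * f 2 2 - f 1 2 * f 2 0)
  + f 0 2 * (f 1 0 * f 2 1 - f 1 1 * f 2 0).
Proof.
move=> f.
have -> : M = \matrix_(i,j) f (val i) (val j).
  by apply/matrixP => i j; rewrite mxE /f !inord_val.
rewrite (expand_det_row _ 0) !big_ord_recl big_ord0 /cofactor.
rewrite !(expand_det_row _ 0) !big_ord_recl !big_ord0 /cofactor.
rewrite !det_mx11 !mxE /=.
rewrite /bump /=. rewrite /f; ring.
Qed.

Definition cmp (R : realType) (x : 'rV[R]_3) (k : nat) : R := x 0 (inord k).

Lemma cmpE (R : realType) (x : 'rV[R]_3) (i : 'I_3) : x 0 i = cmp x i.
Proof. by rewrite /cmp inord_val. Qed.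

Lemma cmpD (R : realType) (x y : 'rV[R]_3) k : cmp (x + y) k = cmp x k + cmp y k.
Proof. by rewrite /cmp mxE. Qed.
Lemma cmpZ (R : realType) (x : 'rV[R]_3) s k : cmp (s *: x) k = s * cmp x k.
Proof. by rewrite /cmp mxE. Qed.
Lemma cmpN (R : realType) (x : 'rV[R]_3) k : cmp (- x) k = - cmp x k.
Proof. by rewrite /cmp mxE. Qed.
Lemma cmp0 (R : realType) k : cmp (0 : 'rV[R]_3) k = 0.
Proof. by rewrite /cmp mxE. Qed.

Lemma rowv_eq (R : realType) (x y : 'rV[R]_3) :
  cmp x 0 = cmp y 0 -> cmp x 1 = cmp y 1 -> cmp x 2 = cmp y 2 -> x = y.
Proof.
move=> h0 h1 h2; apply/rowP => j; rewrite !cmpE.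
by case: j => [[|[|[|k]]] Hk] //=.
Qed.

Lemma dotE (R : realType) (x y : 'rV[R]_3) :
  dot x y = cmp x 0 * cmp y 0 + cmp x 1 * cmp y 1 + cmp x 2 * cmp y 2.
Proof.
rewrite /dot !big_ord_recl big_ord0 !cmpE /= /bump /=. ring.
Qed.

Lemma det3E (R : realType) (a b c : 'rV[R]_3) : det3 a b c =
  cmp a 0 * (cmp b 1 * cmp c 2 - cmp b 2 * cmp c 1)
  - cmp a 1 * (cmp b 0 * cmp c 2 - cmp b 2 * cmp c 0)
  + cmp a 2 * (cmp b 0 * cmp c 1 - cmp b 1 * cmp c 0).
Proof.
rewrite /det3 det33 !mxE !inordK //=.
Qed.

Lemma dot_lin (R : realType) (x y z : 'rV[R]_3) s t :
  dot (s *: x + t *: y) z = s * dot x z + t * dot y z.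
Proof. rewrite !dotE !cmpD !cmpZ. ring. Qed.



Lemma witness (R : realType) n (u : 'I_n -> 'rV[R]_3) m :
  polygon_balanced u -> essential u m ->
  exists v, v != 0 /\ dot v (u m) < 0 /\ forall k, k != m -> 0 <= dot v (u k).
Proof.
move=> Hb He.
have [v Hv] := not_all_ex_not _ _ He.
have [Hv0 Hv1] := imply_to_and _ _ Hv.
have Hk : forall k, k != m -> 0 <= dot v (u k).
  move=> k Hk; rewrite leNgt; apply/negP => Hlt; apply: Hv1; by exists k.
exists v; split => //; split => //.
have [k [_ Hk']] := Hb v Hv0.
case: (eqVneq k m) => [<-//|Hkm].
by move: (Hk k Hkm); rewrite leNgt Hk'.
Qed.

Lemma L0 (R : realType) (v x y z : 'rV[R]_3) : v != 0 ->
  dot v x = 0 -> dot v y = 0 -> dot v z = 0 -> det3 x y z = 0.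
Proof.
move=> Hv hx hy hz.
apply/eqP; apply: contraNT Hv => Hd; apply/eqP.
have e : forall k, (k < 3)%N -> det3 x y z * cmp v k =
   dot v x * (cmp y ((k+1) %% 3) * cmp z ((k+2) %% 3) - cmp y ((k+2) %% 3) * cmp z ((k+1) %% 3))
 + dot v y * (cmp z ((k+1) %% 3) * cmp x ((k+2) %% 3) - cmp z ((k+2) %% 3) * cmp x ((k+1) %% 3))
 + dot v z * (cmp x ((k+1) %% 3) * cmp y ((k+2) %% 3) - cmp x ((k+2) %% 3) * cmp y ((k+1) %% 3)).
  by case=> [|[|[|k]]] // _; rewrite det3E !dotE /=; ring.
have e0 : forall k, (k < 3)%N -> cmp v k = 0.
  move=> k Hk; have := e k Hk; rewrite hx hy hz !mul0r !addr0 => /eqP.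
  by rewrite mulf_eq0 (negbTE Hd) => /eqP.
by apply: rowv_eq; rewrite cmp0; apply: e0.
Qed.

Lemma avoid n (A : {set 'I_n}) : (#|A| < n)%N -> exists k, k \notin A.
Proof.
move=> H.
have : (0 < #|~: A|)%N by rewrite cardsCs setCK card_ord; lia.
by case/card_gt0P => k; rewrite in_setC => Hk; exists k.
Qed.

Lemma three_others n (a b c : 'I_n) : (6 <= n)%N ->
  exists k1 k2 k3 : 'I_n, [/\ k1 != a, k1 != b & k1 != c] /\ [/\ k2 != a, k2 != b & k2 != c] /\
     [/\ k3 != a, k3 != b & k3 != c] /\ [/\ k1 != k2, k1 != k3 & k2 != k3].
Proof.
move=> Hn.
pose A := a |: (b |: [set c]).
have cA : (#|A| <= 3)%N.
  rewrite /A !cardsU1 cards1; case: (_ \in _); case: (_ \in _) => //.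
have [k1 H1] : exists k, k \notin A by apply: avoid; apply: leq_ltn_trans cA _; lia.
have [k2 H2] : exists k, k \notin k1 |: A.
  apply: avoid; have := cardsU1 k1 A; move: cA; rewrite -/A.
  by case: (_ \in _) => /= ? ->; lia.
have [k3 H3] : exists k, k \notin k2 |: (k1 |: A).
  apply: avoid; have := cardsU1 k2 (k1 |: A); have := cardsU1 k1 A; move: cA; rewrite -/A.
  by case: (_ \in _); case: (_ \in _) => /= ? -> ->; lia.
move: H1 H2 H3; rewrite /A !in_setU !in_set1 !negb_or.
move=> /and3P [h1 h2 h3] /and4P [h4 h5 h6 h7] /and5P [h8 h9 h10 h11 h12].
exists k1, k2, k3; do !split => //; by rewrite eq_sym.
Qed.



Lemma dot_lin3 (R : realType) (x y z w : 'rV[R]_3) s t r :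
  dot (s *: x + t *: y + r *: z) w = s * dot x w + t * dot y w + r * dot z w.
Proof. rewrite !dotE !cmpD !cmpZ. ring. Qed.

Lemma dot0 (R : realType) (w : 'rV[R]_3) : dot 0 w = 0.
Proof. rewrite dotE !cmp0. ring. Qed.

Lemma ML (R : realType) n (u : 'I_n -> 'rV[R]_3) (a b c p : 'I_n) :
  (6 <= n)%N -> general_position u -> polygon_balanced u ->
  a != b -> b != c -> a != c -> essential u a -> essential u b -> essential u c ->
  p != a -> p != b -> p != c ->
  det3 (u a) (u b) (u c) * det3 (u p) (u b) (u c) < 0.
Proof.
move=> Hn Hgp Hb ab bc ac Ea Eb Ec pa pb pc.
have [va [va0 [vaa vak]]] := witness Hb Ea.
have [vb [vb0 [vbb vbk]]] := witness Hb Eb.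
have [vc [vc0 [vcc vck]]] := witness Hb Ec.
have [k1 [k2 [k3 [[h1a h1b h1c] [[h2a h2b h2c] [[h3a h3b h3c] [h12 h13 h23]]]]]]] :=
  three_others a b c Hn.
have G2 : forall v, v != 0 ->
    (forall k, k != a -> k != b -> k != c -> dot v (u k) = 0) -> False.
  move=> v v0 H; have := Hgp k1 k2 k3 h12 h23 h13.
  by rewrite (L0 v0 (H k1 h1a h1b h1c) (H k2 h2a h2b h2c) (H k3 h3a h3b h3c)) eqxx.
have G1 : forall w, 0 <= dot w (u a) -> 0 <= dot w (u b) -> 0 <= dot w (u c) ->
    (forall k, k != a -> k != b -> k != c -> 0 <= dot w (u k)) -> w = 0.
  move=> w ha hb hc hk; apply/eqP; apply: contraT => w0.
  have [k [_ Hk]] := Hb w w0.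
  have : 0 <= dot w (u k).
    case: (eqVneq k a) => [->//|ka]; case: (eqVneq k b) => [->//|kb].
    case: (eqVneq k c) => [->//|kc]; exact: hk.
  by rewrite leNgt Hk.
have Gt : forall v t, v != 0 -> 0 <= t ->
    (forall k, k != a -> k != b -> k != c -> t * dot v (u k) = 0) -> t = 0.
  move=> v t v0 t0 H; apply/eqP; apply: contraT => tn0; exfalso.
  apply: (G2 v v0) => k ka kb kc; have := H k ka kb kc => /eqP.
  by rewrite mulf_eq0 (negbTE tn0) => /eqP.
have G : forall t1 t2 t3, 0 <= t1 -> 0 <= t2 -> 0 <= t3 ->
    0 <= dot (t1 *: va + t2 *: vb + t3 *: vc) (u a) ->
    0 <= dot (t1 *: va + t2 *: vb + t3 *: vc) (u b) ->
    0 <= dot (t1 *: va + t2 *: vb + t3 *: vc) (u c) ->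
    t1 = 0 /\ t2 = 0 /\ t3 = 0.
  move=> t1 t2 t3 t1p t2p t3p ha hb hc.
  have nn : forall k, k != a -> k != b -> k != c ->
      [/\ 0 <= t1 * dot va (u k), 0 <= t2 * dot vb (u k) & 0 <= t3 * dot vc (u k)].
    move=> k ka kb kc; split; apply: mulr_ge0 => //; [exact: vak|exact: vbk|exact: vck].
  have w0 := G1 _ ha hb hc.
  have sum0 : forall k, k != a -> k != b -> k != c ->
      t1 * dot va (u k) + t2 * dot vb (u k) + t3 * dot vc (u k) = 0.
    move=> k ka kb kc; rewrite -dot_lin3 w0 ?dot0 //.
    move=> k' ka' kb' kc'; rewrite dot_lin3.
    by have [x1 x2 x3] := nn k' ka' kb' kc'; lra.
  split; [|split].
  - apply: (Gt va) => // k ka kb kc; have := sum0 k ka kb kc.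
    by have [x1 x2 x3] := nn k ka kb kc; lra.
  - apply: (Gt vb) => // k ka kb kc; have := sum0 k ka kb kc.
    by have [x1 x2 x3] := nn k ka kb kc; lra.
  - apply: (Gt vc) => // k ka kb kc; have := sum0 k ka kb kc.
    by have [x1 x2 x3] := nn k ka kb kc; lra.
have ba : b != a by rewrite eq_sym.
have cb : c != b by rewrite eq_sym.
have ca : c != a by rewrite eq_sym.
have P12 := vak b ba. have P13 := vak c ca.
have P21 := vbk a ab. have P23 := vbk c cb.
have P31 := vck a ac. have P32 := vck b bc.
move: vaa vbb vcc P12 P13 P21 P23 P31 P32.
set q11 := dot va (u a); set q12 := dot va (u b); set q13 := dot va (u c).
set q21 := dot vb (u a); set q22 := dot vb (u b); set q23 := dot vb (u c).
set q31 := dot vc (u a); set q32 := dot vc (u b); set q33 := dot vc (u c).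
move=> P11 P22 P33 P12 P13 P21 P23 P31 P32.
have m23 : 0 < q22 * q33 - q23 * q32.
  rewrite ltNge; apply/negP => H.
  have [_ [H2 _]] : (0:R) = 0 /\ - q33 = 0 /\ q23 = 0.
    apply: (G 0 (- q33) q23) => //; rewrite ?dot_lin3 -/q11 -/q12 -/q13 -/q21 -/q22 -/q23 -/q31 -/q32 -/q33.
    - lra.
    - rewrite mul0r add0r; apply: addr_ge0; apply: mulr_ge0 => //; lra.
    - lra.
    - lra.
  lra.
pose t1 := q22 * q33 - q23 * q32.
pose t2 := q13 * q32 - q12 * q33.
pose t3 := q12 * q23 - q13 * q22.
pose E := t1 * q11 + t2 * q21 + t3 * q31.
have t1p : 0 <= t1 by rewrite /t1; lra.
have t2p : 0 <= t2.
  rewrite /t2; apply: addr_ge0; [exact: mulr_ge0|rewrite -mulrN; apply: mulr_ge0 => //; lra].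
have t3p : 0 <= t3.
  rewrite /t3; apply: addr_ge0; [exact: mulr_ge0|rewrite -mulrN; apply: mulr_ge0 => //; lra].
have E0 : E < 0.
  rewrite ltNge; apply/negP => H.
  have [H1 _] : t1 = 0 /\ t2 = 0 /\ t3 = 0.
    apply: (G t1 t2 t3) => //; rewrite dot_lin3 -/q11 -/q12 -/q13 -/q21 -/q22 -/q23 -/q31 -/q32 -/q33.
    - by move: H; rewrite /E.
    - rewrite /t1 /t2 /t3; lra.
    - rewrite /t1 /t2 /t3; lra.
  rewrite /t1 in H1; lra.
have Cr : forall v, det3 (u a) (u b) (u c) * dot v (u p) =
    det3 (u p) (u b) (u c) * dot v (u a) + det3 (u a) (u p) (u c) * dot v (u b)
    + det3 (u a) (u b) (u p) * dot v (u c).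
  move=> v; rewrite !det3E !dotE; ring.
have S0 : 0 <= t1 * dot va (u p) + t2 * dot vb (u p) + t3 * dot vc (u p).
  apply: addr_ge0; [apply: addr_ge0|]; apply: mulr_ge0 => //;
    [exact: vak|exact: vbk|exact: vck].
have key : det3 (u a) (u b) (u c) * (t1 * dot va (u p) + t2 * dot vb (u p) + t3 * dot vc (u p))
    = det3 (u p) (u b) (u c) * E.
  transitivity (t1 * (det3 (u a) (u b) (u c) * dot va (u p)) + t2 * (det3 (u a) (u b) (u c) * dot vb (u p))
     + t3 * (det3 (u a) (u b) (u c) * dot vc (u p))); first ring.
  rewrite !Cr -/q11 -/q12 -/q13 -/q21 -/q22 -/q23 -/q31 -/q32 -/q33 /E /t1 /t2 /t3; ring.
move: key S0 E0.
set D := det3 (u a) (u b) (u c); set al := det3 (u p) (u b) (u c).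
set S := (X in D * X = _) => key S0 E0.
have h1 : 0 <= (D * al) * E.
  by rewrite -mulrA -key mulrA; apply: mulr_ge0 => //; rewrite -expr2 sqr_ge0.
have h2 : D * al <= 0.
  rewrite leNgt; apply/negP => h; move: h1; rewrite leNgt (pmulr_rlt0 _ h) E0 //.
have h3 : D * al != 0 by apply: mulf_neq0; apply: Hgp.
by rewrite lt_neqAle h3 h2.
Qed.



Lemma F (R : realType) (a b c p : 'rV[R]_3) :
  det3 a b c * det3 p b c < 0 -> det3 b c a * det3 p c a < 0 ->
  det3 c a b * det3 p a b < 0 ->
  exists y, on_arc a b y /\ on_arc p c (-y) /\ on_arc c p (-y).
Proof.
move=> h1 h2 h3.
have c1 : det3 b c a = det3 a b c by rewrite !det3E; ring.
have c2 : det3 p c a = det3 a p c by rewrite !det3E; ring.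
have c3 : det3 c a b = det3 a b c by rewrite !det3E; ring.
have c4 : det3 p a b = det3 a b p by rewrite !det3E; ring.
rewrite c1 c2 in h2; rewrite c3 c4 in h3.
move: h1 h2 h3.
set D := det3 a b c.
set al := D * det3 p b c. set be := D * det3 a p c. set ga := D * det3 a b p.
move=> hal hbe hga.
pose w := (- al) *: a + (- be) *: b.
have sq : forall x : R, 0 <= x * x by move=> x; rewrite -expr2 sqr_ge0.
have ww : 0 < dot w w.
  rewrite lt_neqAle; apply/andP; split; last first.
    by rewrite dotE; apply: addr_ge0; [apply: addr_ge0|]; apply: sq.
  apply/negP => /eqP H.
  have z : forall k, (k < 3)%N -> cmp w k = 0.
    move=> k hk; move: H; rewrite dotE => H.
    have : cmp w k * cmp w k = 0.
      have := sq (cmp w 0); have := sq (cmp w 1); have := sq (cmp w 2).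
      by case: k hk => [|[|[|k]]] //= _ ? ? ?; lra.
    by move/eqP; rewrite mulf_eq0 orbb => /eqP.
  have e : det3 w b c = - al * D.
    by rewrite /w /al /D !det3E !cmpD !cmpZ; ring.
  move: e; rewrite det3E !z // => e.
  have : al * D = 0 by lra.
  move/eqP; rewrite mulf_eq0 => /orP [/eqP|/eqP] h; first lra.
  by move: hal; rewrite /al h mul0r ltxx.
pose r := Num.sqrt (dot w w).
have rp : 0 < r by rewrite sqrtr_gt0.
have rr : r * r = dot w w by rewrite -expr2 sqr_sqrtr // ltW.
have rn : r != 0 by rewrite gt_eqF.
pose y := r^-1 *: w.
have sy : on_sphere y.
  rewrite /on_sphere (_ : dot y y = r^-1 * r^-1 * dot w w); last first.
    by rewrite !dotE /y !cmpZ; ring.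
  rewrite -rr; field; exact: rn.
have sny : on_sphere (- y).
  by move: sy; rewrite /on_sphere !dotE !cmpN => <-; ring.
have ri : 0 <= r^-1 by rewrite invr_ge0 ltW.
exists y; split; [|split].
- split => //; exists (r^-1 * - al), (r^-1 * - be); split; [|split].
  + apply: mulr_ge0 => //; lra.
  + apply: mulr_ge0 => //; lra.
  + by apply: rowv_eq; rewrite /y /w !(cmpD, cmpZ); ring.
- split => //; exists (r^-1 * (D * D)), (r^-1 * - ga); split; [|split].
  + by apply: mulr_ge0 => //; apply: sq.
  + apply: mulr_ge0 => //; lra.
  + by apply: rowv_eq; rewrite /y /w !(cmpN, cmpD, cmpZ) /al /be /ga /D !det3E; ring.
- split => //; exists (r^-1 * - ga), (r^-1 * (D * D)); split; [|split].
  + apply: mulr_ge0 => //; lra.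
  + by apply: mulr_ge0 => //; apply: sq.
  + by apply: rowv_eq; rewrite /y /w !(cmpN, cmpD, cmpZ) /al /be /ga /D !det3E; ring.
Qed.



Lemma nxt_spec n (i : 'I_n) :
  ((i.+1 < n)%N /\ (nxt i : nat) = i.+1) \/ (i.+1 = n /\ (nxt i : nat) = 0%N).
Proof.
rewrite /nxt /=; have := ltn_ord i.
case: (ltngtP i.+1 n) => h hi; first by left; rewrite modn_small.
- by exfalso; lia.
- by right; rewrite h modnn.
Qed.

Lemma prev_ex n (c : 'I_n) : exists p : 'I_n, nxt p = c.
Proof.
have hc := ltn_ord c.
pose k := if (c : nat) == 0%N then n.-1 else (c : nat).-1.
have hk : (k < n)%N by rewrite /k; case: eqP => _; lia.
exists (Ordinal hk); apply: val_inj; have := nxt_spec (Ordinal hk).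
rewrite /k /=; case: eqP => h; lia.
Qed.

Lemma neq_nat n (x y : 'I_n) : x != y -> (x : nat) <> y.
Proof. by move=> /eqP h e; apply: h; exact: val_inj. Qed.

Theorem lemma6 (R : realType) (n : nat) (u : 'I_n -> 'rV[R]_3) :
  (6 <= n)%N ->
  (forall i, on_sphere (u i)) ->
  general_position u ->
  polygon_balanced u ->
  no_self_intersection u ->
  no_antipodal_intersection u ->
  (exists a b c : 'I_n, [/\ a != b, b != c & a != c] /\
     forall m, essential u m <-> (m = a \/ m = b \/ m = c)) ->
  forall i : 'I_n, essential u i -> ~ essential u (nxt i).
Proof.
move=> Hn _ Hgp Hbal _ Hnai [a [b [c [[ab bc ac] Hess]]]] i Ei Eni.
have ii : i != nxt i.
  apply/eqP => h; have := nxt_spec i; rewrite -h; lia.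
have [e [Ee [ei eni]]] : exists e, essential u e /\ e != i /\ e != nxt i.
  move: ((Hess i).1 Ei) ((Hess (nxt i)).1 Eni) => hi hn.
  have Ea : essential u a by apply/(Hess a).2; left.
  have Eb : essential u b by apply/(Hess b).2; right; left.
  have Ec : essential u c by apply/(Hess c).2; right; right.
  case: hi => [hi|[hi|hi]]; case: hn => [hn|[hn|hn]];
  try (by exfalso; move: ii; rewrite hn hi eqxx).
  all: try first [ exists a; rewrite hn hi; split => //; split; first [done | by rewrite eq_sym]
             | exists b; rewrite hn hi; split => //; split; first [done | by rewrite eq_sym]
             | exists c; rewrite hn hi; split => //; split; first [done | by rewrite eq_sym] ].
have Ea : essential u a by apply/(Hess a).2; left.
have ie : i != e by rewrite eq_sym.
have nie : nxt i != e by rewrite eq_sym.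
have [p Hp] := prev_ex e.
have Fp : forall q, q != i -> q != nxt i -> q != e -> exists y,
    on_arc (u i) (u (nxt i)) y /\ on_arc (u q) (u e) (- y) /\ on_arc (u e) (u q) (- y).
  move=> q qa qb qc; apply: F.
  - exact: (ML Hn Hgp Hbal ii nie ie Ei Eni Ee qa qb qc).
  - by apply: (ML Hn Hgp Hbal nie ei _ Eni Ee Ei qb qc qa); rewrite eq_sym.
  - exact: (ML Hn Hgp Hbal ei ii eni Ee Ei Eni qc qa qb).
case: (boolP [&& p != i, p != nxt i & p != e]) => [/and3P [pa pb pc]|hp].
  have [y [y1 [y2 _]]] := Fp p pa pb pc.
  apply: (Hnai i p).
    by split; [rewrite eq_sym|split => //; rewrite Hp].
  by exists y; split => //; rewrite /on_edge Hp.
case: (boolP [&& nxt e != i, nxt e != nxt i & nxt e != e]) => [/and3P [sa sb sc]|hs].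
  have [y [y1 [_ y3]]] := Fp (nxt e) sa sb sc.
  apply: (Hnai i e).
    by split => //; split; [rewrite eq_sym|rewrite eq_sym].
  by exists y; split.
move: hp hs; rewrite !negb_and !negbK.
move=> /or3P [/eqP hp|/eqP hp|/eqP hp] /or3P [/eqP hs|/eqP hs|/eqP hs];
  move: (neq_nat ii) (neq_nat ei) (neq_nat eni) (congr1 (@nat_of_ord n) hp) (congr1 (@nat_of_ord n) hs) (congr1 (@nat_of_ord n) Hp)
    (nxt_spec i) (nxt_spec p) (nxt_spec e) (ltn_ord i) (ltn_ord e) (ltn_ord p); lia.
Qed.
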